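(* Let $f_0,f_2>0$, let $0<\Lambda_1<\Lambda_{in}$, and let $\mathfrak{c}:[\Lambda_1,\Lambda_{in}]\to\mathbb{R}$ be continuous with $192 f_2\Lambda^2-2f_0\mathfrak{c}(\Lambda)\neq 0$ for all $\Lambda$. Define $$G_{\rm eff}(\Lambda)=\frac{3\pi}{192 f_2\Lambda^2-2f_0\,\mathfrak{c}(\Lambda)} .$$ Let $h:[\Lambda_1,\Lambda_{in}]\to\mathbb{R}$ be continuous with $1-\tfrac{4\pi}{3}G_{\rm eff}(\Lambda)h(\Lambda)\neq 0$, and define $G_{{\rm eff},H}(\Lambda)=\dfrac{G_{\rm eff}(\Lambda)}{1-\frac{4\pi}{3}G_{\rm eff}(\Lambda)h(\Lambda)}$. Use the time–energy relation $\Lambda=t^{-1/2}$ (so $t\in[\Lambda_{in}^{-2},\Lambda_1^{-2}]$), and for a function $\mathcal{M}$ of $t$ write $\mathcal{M}(\Lambda):=\mathcal{M}(t)$ at $t=\Lambda^{-2}$. (a) (No gravitational memory.) If $\mathcal{M}:[\Lambda_{in}^{-2},\Lambda_1^{-2}]\to(0,\infty)$ is differentiable and satisfies $\dfrac{d\mathcal{M}}{dt}=-\big(G_{\rm eff}(t^{-1/2})\,\mathcal{M}(t)\big)^{-2}$, then for every $\Lambda\in[\Lambda_1,\Lambda_{in}]$ $$\mathcal{M}(\Lambda)=\sqrt[3]{\mathcal{M}^3(\Lambda_{in})-\frac{2}{3\pi^2}\int_\Lambda^{\Lambda_{in}}\frac{(192 f_2x^2-2f_0\mathfrak{c}(x))^2}{x^3}\,dx}.$$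 (b) (Gravitational memory.) If $\mathcal{M}:[\Lambda_{in}^{-2},\Lambda_1^{-2}]\to(0,\infty)$ is differentiable and satisfies $\dfrac{d\mathcal{M}}{dt}=-\big(G_{{\rm eff},H}(t^{-1/2})\,\mathcal{M}(t)\big)^{-2}$, then for every $\Lambda\in[\Lambda_1,\Lambda_{in}]$ $$\mathcal{M}(\Lambda)=\sqrt[3]{\mathcal{M}^3(\Lambda_{in})-6\int_\Lambda^{\Lambda_{in}}\frac{\big(1-\frac{4\pi}{3}G_{\rm eff}(x)h(x)\big)^2}{x^3\,G_{\rm eff}(x)^2}\,dx}.$$
   Context: Physical interpretation: $\mathcal{M}$ is the mass of a primordial black hole evaporating by Hawking radiation in the radiation-dominated era ($a(t)=t^{1/2}$, energy $\Lambda=1/a(t)$), $\Lambda_{in}$ the energy at which this era begins. $G_{\rm eff}$ is the effective gravitational constant of the noncommutative geometry model, with $\mathfrak{c}(\Lambda)=\mathrm{Tr}(MM^\dagger)$ the renormalization-group-running trace of the squared Majorana mass matrix, and $h(\Lambda)$ plays the role of $|H|^2$ for a (nearly constant) Higgs field $H$; in the paper it is taken to be $|H|^2\sim\mu_0^2/(2\lambda_0)$. $G_{{\rm eff},H}$ is the effective gravitational constant modified by the conformal coupling $-\frac1{12}\int R|H|^2$ to the Higgs field. *)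

(* Defs.v *)
From Stdlib Require Import Reals.
From Coquelicot Require Import Coquelicot.
Open Scope R_scope.

Definition cbrt (x : R) : R :=
  match Rlt_dec 0 x with
  | left _ => exp (ln x / 3)
  | right _ =>
      match Rlt_dec x 0 with
      | left _ => - exp (ln (- x) / 3)
      | right _ => 0
      end
  end.

Definition Geff (f0 f2 : R) (c : R -> R) (L : R) : R :=
  3 * PI / (192 * f2 * L ^ 2 - 2 * f0 * c L).

Definition GeffH (f0 f2 : R) (c h : R -> R) (L : R) : R :=
  Geff f0 f2 c L / (1 - 4 * PI / 3 * Geff f0 f2 c L * h L).

Definition continuous_on_Icc (f : R -> R) (a b : R) : Prop :=
  forall x, a <= x <= b ->
    filterlim f (within (fun y => a <= y <= b) (locally x)) (locally (f x)).

(* Main.v *)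
Require Import Defs.
From Stdlib Require Import Reals Lra Psatz.
From Coquelicot Require Import Coquelicot.
Open Scope R_scope.

Definition clamp (a b x : R) : R := Rmax a (Rmin b x).

Lemma clamp_in a b x : a <= b -> a <= clamp a b x <= b.
Proof. intros. unfold clamp, Rmax, Rmin. repeat destruct Rle_dec; lra. Qed.

Lemma clamp_id a b x : a <= x <= b -> clamp a b x = x.
Proof. intros. unfold clamp, Rmax, Rmin. repeat destruct Rle_dec; lra. Qed.

Lemma clamp_lip a b x y : Rabs (clamp a b x - clamp a b y) <= Rabs (x - y).
Proof.
  unfold clamp, Rmax, Rmin. repeat destruct Rle_dec;
  repeat (match goal with |- context [Rabs ?z] => destruct (Rcase_abs z) as [?|?];
     [rewrite (Rabs_left z) by lra | rewrite (Rabs_right z) by lra] end); lra.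
Qed.

Lemma clamp_cont a b x : continuity_pt (clamp a b) x.
Proof.
  unfold continuity_pt, continue_in, limit1_in, limit_in. intros eps He.
  exists eps; split; auto. intros y [_ Hy]. simpl in *. unfold R_dist in *.
  eapply Rle_lt_trans; [apply clamp_lip|]. auto.
Qed.

Lemma clamp_comp_cont f a b x : a <= b -> continuous_on_Icc f a b ->
  continuity_pt (fun y => f (clamp a b y)) x.
Proof.
  intros Hab Hf. apply continuity_pt_filterlim.
  eapply filterlim_comp with (G := within (fun y => a <= y <= b) (locally (clamp a b x))).
  - intros P HP. unfold within in HP.
    pose proof (proj1 (continuity_pt_filterlim _ _) (clamp_cont a b x)) as Hc.
    specialize (Hc _ HP). simpl in Hc. unfold filtermap in *.
    eapply filter_imp; [|exact Hc]. intros y Hy. apply Hy. apply clamp_in; auto.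
  - apply Hf. apply clamp_in; auto.
Qed.

Lemma ftc (Phi q : R -> R) a b : 0 < a -> a < b ->
  (forall x, a <= x <= b -> continuity_pt Phi x) ->
  (forall x, 0 < x -> continuity_pt q x) ->
  (forall x, a < x < b -> is_derive Phi x (q x)) ->
  Phi b - Phi a = RInt q a b.
Proof.
  intros Ha Hab HP Hq HD.
  assert (HI : forall x, 0 < x -> is_derive (fun y => RInt q a y) x (q x)).
  { intros x Hx. apply (is_derive_RInt q (fun y => RInt q a y) a x).
    - exists (mkposreal (Rmin a x) ltac:(apply Rmin_pos; lra)). intros y Hy.
      apply (RInt_correct (V:=R_CompleteNormedModule)). apply (ex_RInt_continuous (V:=R_CompleteNormedModule)). intros z Hz.
      apply continuity_pt_filterlim. apply Hq.
      unfold ball in Hy; simpl in Hy; unfold AbsRing_ball, abs, minus, plus, opp in Hy; simpl in Hy.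
      apply Rabs_def2 in Hy. pose proof (Rmin_l a x). pose proof (Rmin_r a x).
      pose proof (Rmin_l a y). pose proof (Rmin_r a y). destruct Hz. 
      assert (0 < Rmin a y). { apply Rmin_pos; lra. } lra.
    - apply continuity_pt_filterlim. apply Hq; auto. }
  destruct (MVT_gen (fun x => Phi x - RInt q a x) a b (fun _ => 0)) as [c [_ Hc]].
  - intros x Hx. rewrite Rmin_left in Hx by lra. rewrite Rmax_right in Hx by lra.
    replace 0 with (q x - q x) by ring. apply (is_derive_minus (V:=R_NormedModule)); auto. apply HI; lra.
  - intros x Hx. rewrite Rmin_left in Hx by lra. rewrite Rmax_right in Hx by lra.
    apply continuity_pt_minus; auto. apply continuity_pt_filterlim.
    apply (ex_derive_continuous (fun y => RInt q a y)). eexists. apply HI. lra.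
  - rewrite RInt_point in Hc. change zero with 0 in Hc. lra.
Qed.
Lemma cmul f g x : continuity_pt f x -> continuity_pt g x -> continuity_pt (fun y => f y * g y) x.
Proof. intros. exact (continuity_pt_mult f g x H H0). Qed.
Lemma cinv f x : continuity_pt f x -> f x <> 0 -> continuity_pt (fun y => / f y) x.
Proof. intros. exact (continuity_pt_inv f x H H0). Qed.
Lemma cconst c x : continuity_pt (fun _ => c) x.
Proof. apply continuity_pt_const. intros a b; reflexivity. Qed.
Lemma cid x : continuity_pt (fun y => y) x.
Proof. exact (derivable_continuous_pt _ _ (derivable_pt_id x)). Qed.
Lemma cpow f n x : continuity_pt f x -> continuity_pt (fun y => f y ^ n) x.
Proof. intros H. induction n; simpl. apply cconst. apply cmul; auto. Qed.
Lemma cminus f g x : continuity_pt f x -> continuity_pt g x -> continuity_pt (fun y => f y - g y) x.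
Proof. intros. exact (continuity_pt_minus f g x H H0). Qed.

Lemma inv_bounds L1 Lin y : 0 < L1 -> L1 <= y <= Lin -> / Lin ^ 2 <= / y ^ 2 <= / L1 ^ 2.
Proof.
  intros. split; apply Rinv_le_contravar; try (simpl; nra).
Qed.

Lemma inv_bounds_lt L1 Lin y : 0 < L1 -> L1 < y < Lin -> / Lin ^ 2 < / y ^ 2 < / L1 ^ 2.
Proof.
  intros. split; apply Rinv_lt_contravar; simpl; try nra; apply Rmult_lt_0_compat; nra.
Qed.

Lemma gen L1 Lin (G M : R -> R) :
 0 < L1 -> L1 < Lin ->
 (forall x, continuity_pt (fun y => G (clamp L1 Lin y)) x) ->
 (forall x, L1 <= x <= Lin -> G x <> 0) ->
 (forall t, / Lin ^ 2 <= t <= / L1 ^ 2 -> 0 < M t) ->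
 continuous_on_Icc M (/ Lin ^ 2) (/ L1 ^ 2) ->
 (forall t, / Lin ^ 2 < t < / L1 ^ 2 -> is_derive M t (- / (G (/ sqrt t) * M t) ^ 2)) ->
 forall L, L1 <= L <= Lin ->
   M (/ L ^ 2) ^ 3 = M (/ Lin ^ 2) ^ 3 - 6 * RInt (fun x => / G x ^ 2 / x ^ 3) L Lin.
Proof.
  intros H1 H2 HGc HG0 HM HMc HMd L HL.
  assert (Hab : / Lin ^ 2 <= / L1 ^ 2) by (apply Rinv_le_contravar; simpl; nra).
  destruct (Req_dec L Lin) as [->|HLne].
  { rewrite RInt_point. change zero with 0. ring. }
  set (a := / Lin ^ 2). set (b := / L1 ^ 2).
  set (Phi := fun y => M (clamp a b (/ y ^ 2)) ^ 3).
  set (q := fun y => 6 * (/ G (clamp L1 Lin y) ^ 2 / y ^ 3)).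
  assert (Hft : Phi Lin - Phi L = RInt q L Lin).
  { apply ftc; try lra.
    - intros x Hx. unfold Phi. apply cpow.
      apply (continuity_pt_comp (fun y => / y ^ 2) (fun t => M (clamp a b t))).
      + apply cinv. apply cpow, cid.
        apply pow_nonzero; lra.
      + apply clamp_comp_cont; auto.
    - intros x Hx. unfold q. apply cmul; [apply cconst|]. apply cmul.
      + apply cinv. apply cpow. apply HGc.
        apply pow_nonzero. apply HG0. apply clamp_in; lra.
      + apply cinv. apply cpow, cid.
        apply pow_nonzero; lra.
    - intros x Hx.
      assert (Ht := inv_bounds_lt L1 Lin x H1 ltac:(lra)).
      set (t0 := / x ^ 2) in *.
      assert (HMd' : is_derive (fun t => M (clamp a b t)) t0 (- / (G (/ sqrt t0) * M t0) ^ 2)).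
      { eapply is_derive_ext_loc; [|apply HMd; exact Ht].
        exists (mkposreal (Rmin (t0 - a) (b - t0)) ltac:(apply Rmin_pos; unfold a, b; lra)).
        intros y Hy.
        unfold ball in Hy; simpl in Hy; unfold AbsRing_ball, abs, minus, plus, opp in Hy; simpl in Hy.
        apply Rabs_def2 in Hy. pose proof (Rmin_l (t0 - a) (b - t0)). pose proof (Rmin_r (t0 - a) (b - t0)).
        rewrite clamp_id; auto. unfold a, b in *; lra. }
      assert (Hinv : is_derive (fun y => / y ^ 2) x (- 2 / x ^ 3)).
      { auto_derive. intro; nra. field. lra. }
      pose proof (is_derive_comp _ _ _ _ _ HMd' Hinv) as Hc.
      pose proof (is_derive_pow _ 3 _ _ Hc) as Hp.
      unfold Phi. eapply is_derive_ext; [intros; reflexivity|].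
      replace (q x) with (INR 3 * scal (-2 / x ^ 3) (- / (G (/ sqrt t0) * M t0) ^ 2) *
                 M (clamp a b (/ x ^ 2)) ^ Init.Nat.pred 3); [exact Hp|].
      unfold q. rewrite (clamp_id L1 Lin x) by lra. fold t0. rewrite (clamp_id a b t0) by (unfold a, b; lra).
      assert (Hs : / sqrt t0 = x).
      { unfold t0. rewrite sqrt_inv, sqrt_pow2 by lra. field. lra. }
      rewrite Hs. change scal with Rmult. simpl INR. simpl pred.
      assert (G x <> 0) by (apply HG0; lra).
      assert (M t0 <> 0). { assert (0 < M t0) by (apply HM; unfold a, b in *; lra). lra. }
      field. repeat split; auto; lra. }
  unfold Phi in Hft. rewrite !clamp_id in Hft.
  2: { apply inv_bounds; auto; lra. }
  2: { unfold a, b; lra. }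
  assert (Hq : RInt q L Lin = 6 * RInt (fun x => / G x ^ 2 / x ^ 3) L Lin).
  { unfold q. 
    rewrite (RInt_scal (V:=R_CompleteNormedModule) (fun y => / G (clamp L1 Lin y) ^ 2 / y ^ 3)).
    - change scal with Rmult. f_equal. apply RInt_ext. intros x Hx.
      rewrite Rmin_left in Hx by lra. rewrite Rmax_right in Hx by lra.
      rewrite clamp_id by lra. reflexivity.
    - apply (ex_RInt_continuous (V:=R_CompleteNormedModule)). intros z Hz.
      rewrite Rmin_left in Hz by lra. rewrite Rmax_right in Hz by lra.
      apply continuity_pt_filterlim. apply cmul.
      + apply cinv. apply cpow. apply HGc.
        apply pow_nonzero. apply HG0. apply clamp_in; lra.
      + apply cinv. apply cpow, cid.
        apply pow_nonzero; lra. }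
  unfold a. lra.
Qed.

Lemma cbrt_cube y : 0 < y -> cbrt (y ^ 3) = y.
Proof.
  intros Hy. unfold cbrt. destruct (Rlt_dec 0 (y ^ 3)) as [H|H].
  - rewrite ln_pow by lra. simpl INR.
    replace ((1 + 1 + 1) * ln y / 3) with (ln y) by field. apply exp_ln; lra.
  - exfalso. apply H. apply pow_lt; lra.
Qed.

Lemma Geff_nz f0 f2 c L : 192 * f2 * L ^ 2 - 2 * f0 * c L <> 0 -> Geff f0 f2 c L <> 0.
Proof.
  intros H. unfold Geff, Rdiv. apply Rmult_integral_contrapositive_currified.
  pose proof PI_RGT_0; lra. apply Rinv_neq_0_compat; auto.
Qed.

Lemma Geff_cont f0 f2 c L1 Lin x : L1 < Lin -> continuous_on_Icc c L1 Lin ->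
  (forall L, L1 <= L <= Lin -> 192 * f2 * L ^ 2 - 2 * f0 * c L <> 0) ->
  continuity_pt (fun y => Geff f0 f2 c (clamp L1 Lin y)) x.
Proof.
  intros H Hc Hd. unfold Geff, Rdiv. apply cmul; [apply cconst|]. apply cinv.
  - apply cminus; apply cmul; try apply cconst.
    apply cpow. apply clamp_cont. apply clamp_comp_cont; auto; lra.
  - apply Hd. apply clamp_in; lra.
Qed.

Theorem proposition4p7
  (f0 f2 L1 Lin : R) (c h : R -> R)
  (Hf0 : 0 < f0) (Hf2 : 0 < f2) (HL1 : 0 < L1) (HL1in : L1 < Lin)
  (Hc : continuous_on_Icc c L1 Lin)
  (Hden : forall L, L1 <= L <= Lin -> 192 * f2 * L ^ 2 - 2 * f0 * c L <> 0)
  (Hh : continuous_on_Icc h L1 Lin)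
  (HdenH : forall L, L1 <= L <= Lin -> 1 - 4 * PI / 3 * Geff f0 f2 c L * h L <> 0) :
  (forall M : R -> R,
     (forall t, / Lin ^ 2 <= t <= / L1 ^ 2 -> 0 < M t) ->
     continuous_on_Icc M (/ Lin ^ 2) (/ L1 ^ 2) ->
     (forall t, / Lin ^ 2 < t < / L1 ^ 2 ->
        is_derive M t (- / (Geff f0 f2 c (/ sqrt t) * M t) ^ 2)) ->
     forall L, L1 <= L <= Lin ->
       M (/ L ^ 2) =
       cbrt (M (/ Lin ^ 2) ^ 3
             - 2 / (3 * PI ^ 2)
               * RInt (fun x => (192 * f2 * x ^ 2 - 2 * f0 * c x) ^ 2 / x ^ 3) L Lin))
  /\
  (forall M : R -> R,
     (forall t, / Lin ^ 2 <= t <= / L1 ^ 2 -> 0 < M t) ->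
     continuous_on_Icc M (/ Lin ^ 2) (/ L1 ^ 2) ->
     (forall t, / Lin ^ 2 < t < / L1 ^ 2 ->
        is_derive M t (- / (GeffH f0 f2 c h (/ sqrt t) * M t) ^ 2)) ->
     forall L, L1 <= L <= Lin ->
       M (/ L ^ 2) =
       cbrt (M (/ Lin ^ 2) ^ 3
             - 6 * RInt (fun x => (1 - 4 * PI / 3 * Geff f0 f2 c x * h x) ^ 2
                                  / (x ^ 3 * Geff f0 f2 c x ^ 2)) L Lin)).
Proof.
  assert (HPI := PI_RGT_0).
  assert (HMpos : forall M : R -> R, (forall t, / Lin ^ 2 <= t <= / L1 ^ 2 -> 0 < M t) ->
            forall L, L1 <= L <= Lin -> 0 < M (/ L ^ 2)).
  { intros M HM L HL. apply HM. apply inv_bounds; auto. }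
  split; intros M HM HMc HMd L HL.
  - pose proof (gen L1 Lin (Geff f0 f2 c) M HL1 HL1in
      (fun x => Geff_cont f0 f2 c L1 Lin x HL1in Hc Hden)
      (fun x Hx => Geff_nz f0 f2 c x (Hden x Hx)) HM HMc HMd L HL) as E.
    set (T := fun x => (192 * f2 * x ^ 2 - 2 * f0 * c x) ^ 2 / x ^ 3).
    destruct (Req_dec L Lin) as [->|HLne].
    { rewrite RInt_point. change zero with 0. rewrite Rmult_0_r, Rminus_0_r.
      rewrite cbrt_cube; auto. }
    assert (HT : ex_RInt T L Lin).
    { apply (ex_RInt_ext (V:=R_CompleteNormedModule)
        (fun x => (192 * f2 * clamp L1 Lin x ^ 2 - 2 * f0 * c (clamp L1 Lin x)) ^ 2 / x ^ 3)).
      - intros x Hx. rewrite Rmin_left in Hx by lra. rewrite Rmax_right in Hx by lra.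
        unfold T. rewrite clamp_id by lra. reflexivity.
      - apply (ex_RInt_continuous (V:=R_CompleteNormedModule)). intros z Hz.
        rewrite Rmin_left in Hz by lra. rewrite Rmax_right in Hz by lra.
        apply continuity_pt_filterlim. unfold Rdiv. apply cmul.
        + apply cpow. apply cminus; apply cmul; try apply cconst.
          apply cpow. apply clamp_cont. apply clamp_comp_cont; auto; lra.
        + apply cinv. apply cpow, cid. apply pow_nonzero; lra. }
    assert (HR : RInt (fun x => / Geff f0 f2 c x ^ 2 / x ^ 3) L Lin
                 = scal (/ (9 * PI ^ 2)) (RInt T L Lin)).
    { rewrite <- (RInt_scal (V:=R_CompleteNormedModule)) by exact HT.
      apply RInt_ext. intros x Hx. rewrite Rmin_left in Hx by lra. rewrite Rmax_right in Hx by lra.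
      unfold T, Geff. change scal with Rmult.
      assert (192 * f2 * x ^ 2 - 2 * f0 * c x <> 0) by (apply Hden; lra).
      match goal with |- ?a = ?b => change (@eq R a b) end. field. repeat split; auto; try lra; apply pow_nonzero; lra. }
    rewrite HR in E. change scal with Rmult in E.
    replace (M (/ Lin ^ 2) ^ 3 - 2 / (3 * PI ^ 2) * RInt T L Lin) with (M (/ L ^ 2) ^ 3).
    + rewrite cbrt_cube; auto.
    + rewrite E. field. lra.
  - assert (HGH : forall x, L1 <= x <= Lin -> GeffH f0 f2 c h x <> 0).
    { intros x Hx. unfold GeffH, Rdiv. apply Rmult_integral_contrapositive_currified.
      apply Geff_nz; auto. apply Rinv_neq_0_compat; auto. }
    assert (HGHc : forall x, continuity_pt (fun y => GeffH f0 f2 c h (clamp L1 Lin y)) x).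
    { intros x. unfold GeffH, Rdiv. apply cmul.
      - apply Geff_cont; auto.
      - apply cinv.
        + apply cminus; [apply cconst|]. apply cmul. apply cmul. apply cconst.
          apply Geff_cont; auto. apply clamp_comp_cont; auto; lra.
        + apply HdenH. apply clamp_in; lra. }
    pose proof (gen L1 Lin (GeffH f0 f2 c h) M HL1 HL1in HGHc HGH HM HMc HMd L HL) as E.
    replace (M (/ Lin ^ 2) ^ 3 - 6 * RInt (fun x => (1 - 4 * PI / 3 * Geff f0 f2 c x * h x) ^ 2
                                  / (x ^ 3 * Geff f0 f2 c x ^ 2)) L Lin) with (M (/ L ^ 2) ^ 3).
    + rewrite cbrt_cube; auto.
    + rewrite E. f_equal. f_equal. apply RInt_ext. intros x Hx.
      assert (HLx : L1 <= x <= Lin).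
      { destruct (Rle_dec L Lin); [rewrite Rmin_left in Hx by lra; rewrite Rmax_right in Hx by lra
        | rewrite Rmin_right in Hx by lra; rewrite Rmax_left in Hx by lra]; lra. }
      unfold GeffH. assert (Geff f0 f2 c x <> 0) by (apply Geff_nz; auto).
      assert (1 - 4 * PI / 3 * Geff f0 f2 c x * h x <> 0) by auto.
      match goal with |- ?a = ?b => change (@eq R a b) end. field. repeat split; auto; try lra; apply pow_nonzero; lra.
Qed.
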